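(* Let $p$ be any prime and let $F_{at}:\mathbb{F}_p^2\to\mathbb{F}_p^2$ be the map $F_{at}(x,y)=(x^2y,\;x^2y+xy^2)$, where $\mathbb{F}_p=\mathbb{Z}/p\mathbb{Z}$. Then the $p$-th iterate $F_{at}^{\circ p}$ sends every point of $\mathbb{F}_p^2$ to $(0,0)$.
   Context: $F_{at}$ is the reduction modulo $p$ of the integer polynomial map $(x,y)\mapsto(x^2y,\,x^2y+xy^2)$ (called the ''additive trap''); $F_{at}^{\circ p}$ denotes its $p$-fold composition with itself. *)

(* Defs.v *)
From mathcomp Require Import all_boot all_algebra.
Set Implicit Arguments. Unset Strict Implicit. Unset Printing Implicit Defensive.
Import GRing.Theory.
Local Open Scope ring_scope.

Definition F_at (p : nat) (v : 'F_p * 'F_p) : 'F_p * 'F_p :=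
  let: (x, y) := v in (x ^+ 2 * y, x ^+ 2 * y + x * y ^+ 2).

(* Main.v *)
Require Import Defs.
From mathcomp Require Import all_boot all_algebra.
From mathcomp Require Import ring.
Local Open Scope ring_scope.
Import GRing.Theory.

Lemma iter0 (p m : nat) : iter m (@F_at p) (0, 0) = (0, 0).
Proof.
elim: m => //= m ->; rewrite /F_at; congr pair; ring.
Qed.

Lemma iter_le (p k m : nat) v : (k <= m)%N -> iter k (@F_at p) v = (0,0) ->
  iter m (@F_at p) v = (0,0).
Proof.
move=> hkm h; rewrite -(subnK hkm) iterD h; exact: iter0.
Qed.

Lemma key (p : nat) (n : nat) : forall (x c : 'F_p), c + n.+1%:R = 0 ->
  iter n.+2 (@F_at p) (x, x * c) = (0, 0).
Proof.
elim: n => [|n IH] x c h.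
  have hc : c = -1 by apply/eqP; rewrite -subr_eq0 opprK; apply/eqP.
  rewrite /= /F_at hc; congr pair; ring.
rewrite iterSr.
have -> : F_at (x, x * c) = (x ^+ 3 * c, (x ^+ 3 * c) * (c + 1)).
  rewrite /F_at; congr pair; ring.
apply: IH; rewrite -h -addrA; congr (_ + _); rewrite [in RHS]natrS; ring.
Qed.

Theorem mainTheorem1 (p : nat) (hp : prime p) (v : 'F_p * 'F_p) :
  iter p (@F_at p) v = (0, 0).
Proof.
have p1 : (1 <= p)%N by apply: ltnW; exact: prime_gt1.
case: v => x y.
have [->|x0] := eqVneq x 0.
  apply: (@iter_le _ 1 p) => //; rewrite /= /F_at; congr pair; ring.
have [->|y0] := eqVneq y 0.
  apply: (@iter_le _ 1 p) => //; rewrite /= /F_at; congr pair; ring.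
set c := y / x.
have hy : y = x * c by rewrite /c mulrC divfK.
have c0 : c != 0 by rewrite /c mulf_neq0 ?invr_eq0.
set a := - c.
have a0 : a != 0 by rewrite oppr_eq0.
have ha : (nat_of_ord a)%:R = a := natr_Zp a.
have alt : (nat_of_ord a < p)%N.
  have := ltn_ord a; rewrite [X in (_ < X)%N -> _]Fp_cast //.
have [n En] : exists n, nat_of_ord a = n.+1.
  case E: (nat_of_ord a) => [|n]; last by exists n.
  by move: a0; rewrite -ha E eqxx.
rewrite En in ha alt.
apply: (@iter_le _ n.+2 p) => //.
rewrite hy; apply: key.
by rewrite ha; exact: subrr.
Qed.
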